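(* Let $X$ be a finite set and let $c$ be a choice correspondence on $X$. Then $c$ admits a minimal compromise representation if and only if $c$ satisfies the following five conditions: Condition 1: for all $x,y\in X$ and menus $A\subset B$, if $x,y\in A$, $x\in c(A)$ and $y\in c(B)$, then $x\in c(B)$. Condition 2: for all $x,y\in X$ and menus $A\subset B$, if $x,y\in A$, $x\in r^{c}(A)$ and $y\in r^{c}(B)$, then $x\in r^{c}(B)$. Condition 3: for every menu $A$ with at least two elements there exists $x\in A$ with $x\notin c(A)$. Condition 4: for every menu $A$ and all $x,y\in X$, if $x\in A\setminus c(A)$ and $x\in c(A\cup\{y\})$, then $y\notin c(A\cup\{y\})$. Condition 5: for every menu $A$ and every menu $B\subseteq r^{c}(A)$ with at least two elements, there exists $x\in B$ with $x\notin c(B)$ such that $B=c(B)\cup\{x\}$.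
   Context: A menu is a nonempty subset of $X$. A choice correspondence is a map $c$ assigning to each menu $A$ a nonempty subset $c(A)\subseteq A$. A weak order is a complete and transitive binary relation on $X$; a linear order is an antisymmetric weak order. For a weak order $R$ and menu $A$, $\max(A,R)=\{x\in A: xRy \text{ for all } y\in A\}$. For a linear order $L$, $\min(A,L)$ denotes the unique $x\in A$ with $yLx$ for all $y\in A$. A choice correspondence $c$ admits a minimal compromise representation if there exist a weak order $R$ and a linear order $L$ on $X$ such that for every menu $A$: $c(A)=\max(A,R)$ if $\max(A,R)$ is a singleton, and $c(A)=\max(A,R)\setminus\{\min(\max(A,R),L)\}$ otherwise. For a choice correspondence $c$ and menu $A$, $r^{c}(A)=\{x\in A: c(A\setminus\{x\})\neq c(A)\}$, the set of alternatives whose removal changes the choice (with the convention that for a singleton $A=\{x\}$ the removal of $x$ counts as changing the choice, so $r^c(\{x\})=\{x\}$; in particular $c(A)\subseteq r^c(A)$ always). *)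

(* Defs.v *)
From mathcomp Require Import all_boot.
Set Implicit Arguments. Unset Strict Implicit. Unset Printing Implicit Defensive.

Section Defs.
Variable X : finType.

Definition menu (A : {set X}) : Prop := A != set0.

Definition choice_corr (c : {set X} -> {set X}) : Prop :=
  forall A, menu A -> c A != set0 /\ c A \subset A.

Definition complete_rel (R : rel X) : Prop := forall x y, R x y \/ R y x.
Definition transitive_rel (R : rel X) : Prop :=
  forall x y z, R x y -> R y z -> R x z.
Definition antisymmetric_rel (R : rel X) : Prop :=
  forall x y, R x y -> R y x -> x = y.

Definition weak_order (R : rel X) : Prop := complete_rel R /\ transitive_rel R.
Definition linear_order (L : rel X) : Prop :=
  weak_order L /\ antisymmetric_rel L.

Definition maxR (A : {set X}) (R : rel X) : {set X} :=
  [set x in A | [forall y in A, R x y]].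

Definition is_minL (S : {set X}) (L : rel X) (x : X) : Prop :=
  x \in S /\ forall y, y \in S -> L y x.

Definition mc_rep (c : {set X} -> {set X}) (R L : rel X) : Prop :=
  forall A, menu A ->
    (#|maxR A R| = 1 -> c A = maxR A R) /\
    (#|maxR A R| <> 1 ->
       exists x, is_minL (maxR A R) L x /\ c A = maxR A R :\ x).

Definition admits_mcr (c : {set X} -> {set X}) : Prop :=
  exists R L, weak_order R /\ linear_order L /\ mc_rep c R L.

(* r^c(A), with the convention r^c({x}) = {x} (removing the only element
   of a singleton counts as changing the choice). *)
Definition rc (c : {set X} -> {set X}) (A : {set X}) : {set X} :=
  [set x in A | (A :\ x == set0) || (c (A :\ x) != c A)].

Definition cond1 (c : {set X} -> {set X}) : Prop := forall (x y : X) (A B : {set X}),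
  menu A -> A \subset B -> x \in A -> y \in A -> x \in c A -> y \in c B -> x \in c B.
Definition cond2 (c : {set X} -> {set X}) : Prop := forall (x y : X) (A B : {set X}),
  menu A -> A \subset B -> x \in A -> y \in A ->
  x \in rc c A -> y \in rc c B -> x \in rc c B.
Definition cond3 (c : {set X} -> {set X}) : Prop := forall A : {set X},
  2 <= #|A| -> exists2 x, x \in A & x \notin c A.
Definition cond4 (c : {set X} -> {set X}) : Prop := forall (A : {set X}) (x y : X),
  menu A -> x \in A :\: c A -> x \in c (y |: A) -> y \notin c (y |: A).
Definition cond5 (c : {set X} -> {set X}) : Prop := forall A B : {set X},
  menu A -> B \subset rc c A -> 2 <= #|B| ->
  exists x, [/\ x \in B, x \notin c B & B = c B :|: [set x]].

End Defs.

(* Main.v *)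
Require Import Defs.
From mathcomp Require Import all_boot zify.
Set Implicit Arguments. Unset Strict Implicit. Unset Printing Implicit Defensive.
Set Warnings "-notation-overridden".

Section IfDir.
Variable X : finType.
Variable c : {set X} -> {set X}.
Hypothesis cc : choice_corr c.
Hypothesis h1 : cond1 c.
Hypothesis h2 : cond2 c.
Hypothesis h3 : cond3 c.
Hypothesis h5 : cond5 c.

Lemma cne A : A != set0 -> exists a, a \in c A.
Proof. by move=> hA; apply/set0Pn; case: (cc hA). Qed.
Lemma csub A : A != set0 -> c A \subset A.
Proof. by move=> hA; case: (cc hA). Qed.
Lemma cin A a : A != set0 -> a \in c A -> a \in A.
Proof. by move=> hA /(subsetP (csub hA)). Qed.

Lemma rc_sub A : rc c A \subset A.
Proof. by apply/subsetP => x; rewrite inE => /andP[]. Qed.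

Lemma menuP (A : {set X}) x : x \in A -> A != set0.
Proof. by move=> h; apply/set0Pn; exists x. Qed.

Lemma c_rc A x : A != set0 -> x \in c A -> x \in rc c A.
Proof.
move=> hA hx; rewrite inE (cin hA hx) /=.
case E0: (A :\ x == set0) => //=.
apply/negP => /eqP E.
have hA' : A :\ x != set0 by rewrite E0.
have : x \in c (A :\ x) by rewrite E.
by move/(cin hA'); rewrite !inE eqxx.
Qed.

Definition Lr (x y : X) := x \in c [set x; y].

Lemma pair_menu (x y : X) : [set x; y] != set0.
Proof. by apply: (@menuP _ x); rewrite !inE eqxx. Qed.

Lemma pair_sub (x y : X) (A : {set X}) : x \in A -> y \in A -> [set x; y] \subset A.
Proof. by move=> hx hy; apply/subsetP => z; rewrite !inE => /orP[]/eqP->. Qed.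

Lemma Lrefl (x : X) : Lr x x.
Proof.
rewrite /Lr; case: (cne (pair_menu x x)) => a ha.
move: (cin (pair_menu x x) ha); rewrite !inE orbb; move=> /eqP E; subst a; exact ha.
Qed.

Lemma Lcomplete x y : Lr x y \/ Lr y x.
Proof.
rewrite /Lr; case: (cne (pair_menu x y)) => a ha.
move: (cin (pair_menu x y) ha); rewrite !inE; move=> /orP[]/eqP E; subst a.
  by left.
by right; rewrite setUC.
Qed.

Lemma Lantisym x y : Lr x y -> Lr y x -> x = y.
Proof.
rewrite /Lr => hx hy; apply/eqP; apply/negPn/negP => nxy.
have hc : 2 <= #|[set x; y]| by rewrite cards2 nxy.
have [w hw hwc] := h3 hc.
move: hw; rewrite !inE; move=> /orP[]/eqP E; subst w.
  by rewrite hx in hwc.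
by rewrite setUC hy in hwc.
Qed.

Lemma P1 A a b : A != set0 -> a \in c A -> b \in A -> Lr b a -> b \in c A.
Proof.
move=> hA ha hb hL.
apply: (h1 (y:=a) (A:=[set b; a])) => //.
- exact: pair_menu.
- exact: pair_sub (cin hA ha).
- by rewrite !inE eqxx.
- by rewrite !inE eqxx orbT.
Qed.

Lemma P2 A a b : A != set0 -> a \in rc c A -> b \in A -> Lr b a -> b \in rc c A.
Proof.
move=> hA ha hb hL.
apply: (h2 (y:=a) (A:=[set b; a])) => //.
- exact: pair_menu.
- exact: pair_sub (subsetP (rc_sub A) _ ha).
- by rewrite !inE eqxx.
- by rewrite !inE eqxx orbT.
- exact: c_rc (pair_menu _ _) hL.
Qed.

Lemma cL A a b : A != set0 -> a \in c A -> b \in A -> b \notin c A -> Lr a b.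
Proof.
move=> hA ha hb hbc; case: (Lcomplete a b) => // h.
by rewrite (P1 hA ha hb h) in hbc.
Qed.

Lemma rcL A a b : A != set0 -> a \in rc c A -> b \in A -> b \notin rc c A -> Lr a b.
Proof.
move=> hA ha hb hbc; case: (Lcomplete a b) => // h.
by rewrite (P2 hA ha hb h) in hbc.
Qed.

Lemma Ltrans x y z : Lr x y -> Lr y z -> Lr x z.
Proof.
move=> hxy hyz.
case: (Lcomplete x z) => // hzx.
have exz : x = z.
  apply/eqP; apply/negPn/negP => nxz.
  pose T := [set x; y; z].
  have hT : T != set0 by apply: (@menuP _ x); rewrite !inE eqxx.
  have xT : x \in T by rewrite !inE eqxx.
  have yT : y \in T by rewrite !inE eqxx !orbT.
  have zT : z \in T by rewrite !inE eqxx !orbT.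
  have s2 a b : a \in T -> b \in T -> [set a; b] \subset T by apply: pair_sub.
  have xz : x \in c T -> z \in c T.
    move=> hx; apply: (h1 (y:=x) (A:=[set z; x])) => //;
     [exact: pair_menu | exact: s2 | by rewrite !inE eqxx | by rewrite !inE eqxx orbT].
  have zy : z \in c T -> y \in c T.
    move=> hz; apply: (h1 (y:=z) (A:=[set y; z])) => //;
     [exact: pair_menu | exact: s2 | by rewrite !inE eqxx | by rewrite !inE eqxx orbT].
  have yx : y \in c T -> x \in c T.
    move=> hy; apply: (h1 (y:=y) (A:=[set x; y])) => //;
     [exact: pair_menu | exact: s2 | by rewrite !inE eqxx | by rewrite !inE eqxx orbT].
  have [t ht] := cne hT.
  have allc : x \in c T.
    move: (cin hT ht); rewrite /T !inE; move=> /orP[/orP[]|]/eqP E; subst t.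
    - exact: ht.
    - exact: yx.
    - exact: yx (zy ht).
  have hc : 2 <= #|T|.
    apply: leq_trans (subset_leq_card (s2 _ _ xT zT)); by rewrite cards2 nxz.
  have [w hw hwc] := h3 hc.
  move: hw; rewrite /T !inE; move=> /orP[/orP[]|]/eqP E; subst w.
  - by rewrite allc in hwc.
  - by rewrite (zy (xz allc)) in hwc.
  - by rewrite (xz allc) in hwc.
by rewrite exz; apply: Lrefl.
Qed.


Lemma sub_c (A B : {set X}) a : A \subset B -> a \in A -> a \in c B -> c A \subset c B.
Proof.
move=> sAB haA haB; apply/subsetP => x hx.
have hA := menuP haA.
exact: (h1 (y:=a) hA sAB (cin hA hx) haA hx haB).
Qed.

Lemma sub_rc (A B : {set X}) a : A \subset B -> a \in A -> a \in rc c B -> rc c A \subset rc c B.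
Proof.
move=> sAB haA haB; apply/subsetP => x hx.
have hA := menuP haA.
exact: (h2 (y:=a) hA sAB (subsetP (rc_sub A) _ hx) haA hx haB).
Qed.

Lemma RC_full (B : {set X}) v : v \in B -> v \notin c B -> B = c B :|: [set v] ->
  1 < #|c B| -> rc c B = B.
Proof.
move=> vB vc EB hcard.
apply/eqP; rewrite eqEsubset rc_sub /=; apply/subsetP => x xB.
have hB := menuP vB.
case: (boolP (x \in c B)) => xc; first exact: c_rc.
have xv : x = v.
  by move: xB; rewrite {1}EB !inE (negbTE xc) /=; move/eqP.
subst x.
rewrite inE vB /=; apply/orP; right.
have -> : B :\ v = c B by rewrite {1}EB setUC setU1K.
have [u hu huc] := h3 hcard.
apply/negP => /eqP E; by rewrite E hu in huc.
Qed.

Definition tied (S : {set X}) := (rc c S == S) && (1 < #|S|).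

Lemma tied_menu (S : {set X}) : tied S -> S != set0.
Proof. by case/andP => _ h; rewrite -card_gt0; apply: leq_trans h. Qed.

Lemma T1 (S B : {set X}) : tied S -> B \subset S -> 2 < #|B| -> tied B.
Proof.
move=> hS sBS hB.
have hS' := tied_menu hS.
have sB : B \subset rc c S by case/andP: hS => /eqP ->.
have [v [vB vc EB]] := h5 hS' sB (ltnW hB).
have hc : 1 < #|c B|.
  move: hB; rewrite {1}EB setUC cardsU1 vc /= add1n ltnS; done.
rewrite /tied (RC_full vB vc EB hc) eqxx /=; exact: ltnW.
Qed.

Lemma tied_ext (S : {set X}) s1 s2 y : tied S -> s1 \in S -> s2 \in S -> Lr s1 y -> Lr y s2 ->
  tied (y |: S).
Proof.
move=> hS s1S s2S L1 L2.
set T := y |: S.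
have yT : y \in T by rewrite !inE eqxx.
have sST : S \subset T by apply/subsetP => z hz; rewrite !inE hz orbT.
have hT := menuP yT.
have [s [sS scT]] : exists s, s \in S /\ s \in c T.
  have [t ht] := cne hT.
  move: (cin hT ht); rewrite /T !inE; case/orP => [/eqP E|tS].
    subst t; exists s1; split => //.
    exact: (P1 hT ht (subsetP sST _ s1S) L1).
  by exists t.
have srT : S \subset rc c T.
  have := sub_rc sST sS (c_rc hT scT).
  by case/andP: hS => /eqP ->.
have yr : y \in rc c T := P2 hT (subsetP srT _ s2S) yT L2.
rewrite /tied; apply/andP; split.
  rewrite eqEsubset rc_sub /=; apply/subsetP => z hz.
  case/setU1P: hz => [-> | zS]; [exact: yr | exact: (subsetP srT)].
apply: leq_trans (subset_leq_card sST); by case/andP: hS.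
Qed.

Lemma tied_union_aux (S1 S2 : {set X}) z t : tied S1 -> tied S2 -> z \in S1 -> z \in S2 ->
  t \in S1 -> t \in c (S1 :|: S2) -> tied (S1 :|: S2).
Proof.
move=> hS1 hS2 z1 z2 t1 tc.
set U := S1 :|: S2.
have s1U : S1 \subset U by apply: subsetUl.
have s2U : S2 \subset U by apply: subsetUr.
have hU := menuP (subsetP s1U _ t1).
have r1 : S1 \subset rc c U.
  have := sub_rc s1U t1 (c_rc hU tc). by case/andP: hS1 => /eqP ->.
have r2 : S2 \subset rc c U.
  have := sub_rc s2U z2 (subsetP r1 _ z1). by case/andP: hS2 => /eqP ->.
rewrite /tied; apply/andP; split.
  rewrite eqEsubset rc_sub /= /U; exact/subUsetP.
apply: leq_trans (subset_leq_card s1U); by case/andP: hS1.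
Qed.

Lemma tied_union (S1 S2 : {set X}) z : tied S1 -> tied S2 -> z \in S1 -> z \in S2 -> tied (S1 :|: S2).
Proof.
move=> hS1 hS2 z1 z2.
have hU : S1 :|: S2 != set0 by apply: (@menuP _ z); rewrite inE z1.
have [t ht] := cne hU.
move: (cin hU ht); rewrite inE; case/orP => tS.
  exact: tied_union_aux hS1 hS2 z1 z2 tS ht.
rewrite setUC; apply: tied_union_aux hS2 hS1 z2 z1 tS _; by rewrite setUC.
Qed.


Lemma cD1_sub (A : {set X}) x a : A != set0 -> a \in c A -> x \notin c A -> c (A :\ x) \subset c A.
Proof.
move=> hA ha hx.
have aAx : a \in A :\ x.
  rewrite !inE (cin hA ha) andbT; apply/eqP => E; by rewrite -E ha in hx.
exact: sub_c (subD1set A x) aAx ha.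
Qed.

Lemma Rstar1 (A : {set X}) a : A != set0 -> c A = [set a] -> rc c A = c A.
Proof.
move=> hA Ea.
have ha : a \in c A by rewrite Ea set11.
apply/eqP; rewrite eqEsubset; apply/andP; split; last first.
  by apply/subsetP => z; apply: c_rc.
apply/subsetP => x hx; apply/negPn/negP => xc.
move: hx; rewrite inE => /andP[xA]; apply/negP; rewrite negb_or negbK.
have aAx : a \in A :\ x.
  rewrite !inE (cin hA ha) andbT; apply/eqP => E; by rewrite -E ha in xc.
have hAx := menuP aAx; rewrite hAx /=.
have sub := cD1_sub hA ha xc.
have [u hu] := cne hAx.
have ua : u = a by apply/set1P; rewrite -Ea (subsetP sub _ hu).
subst u.
rewrite eqEsubset sub /= Ea sub1set; exact: hu.
Qed.

Lemma Rstar2_ex n : forall (A : {set X}), #|A| <= n -> A != set0 -> 1 < #|c A| ->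
  exists2 w, w \in rc c A & w \notin c A.
Proof.
elim: n => [|n IH] A hn hA hc.
  by move: hA; rewrite -card_gt0; move: hn; rewrite leqn0 => /eqP ->.
case: (pickP (fun w => (w \in rc c A) && (w \notin c A))) => [w /andP[]|H].
  by exists w.
have h2A : 1 < #|A| by apply: leq_trans hc (subset_leq_card (csub hA)).
have [v vA vc] := h3 h2A.
have := H v; rewrite vc andbT inE vA /=; move/negbT; rewrite negb_or negbK; move=> /andP[hAv /eqP Ec].
have hn' : #|A :\ v| <= n.
  by move: hn; rewrite (cardsD1 v A) vA add1n ltnS.
have hcv : 1 < #|c (A :\ v)| by rewrite Ec.
have [w wr wc] := IH (A :\ v) hn' hAv hcv.
have [a ha] := cne hA.
have aAv : a \in A :\ v.
  rewrite !inE (cin hA ha) andbT; apply/eqP => E; by rewrite -E ha in vc.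
have wrA : w \in rc c A.
  apply: (h2 (y:=a) hAv (subD1set A v) (subsetP (rc_sub _) _ wr) aAv wr (c_rc hA ha)).
by move: (H w); rewrite wrA /= -Ec wc.
Qed.

Lemma Rstar2_uniq (A : {set X}) w1 w2 : A != set0 ->
  w1 \in rc c A -> w1 \notin c A -> w2 \in rc c A -> w2 \notin c A -> w1 = w2.
Proof.
move=> hA r1 n1 r2 n2; apply/eqP; apply/negPn/negP => ne.
have [a ha] := cne hA.
set B := [set w1; w2] :|: c A.
have sB : B \subset rc c A.
  apply/subUsetP; split; first exact: pair_sub.
  by apply/subsetP => z; apply: c_rc.
have sBA : B \subset A := subset_trans sB (rc_sub A).
have w1B : w1 \in B by rewrite !inE eqxx.
have w2B : w2 \in B by rewrite !inE eqxx orbT.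
have aB : a \in B by rewrite inE ha orbT.
have hB := menuP w1B.
have cB : 2 <= #|B|.
  apply: leq_trans (subset_leq_card (subsetUl _ _)); by rewrite cards2 ne.
have [v [vB vc EB]] := h5 hA sB cB.
have key : forall w, w \in B -> w \notin c A -> w = v.
  move=> w wB wn; move: (wB); rewrite {1}EB !inE; case/orP => [wc|/eqP //].
  by have := h1 (y:=a) hB sBA wB aB wc ha; rewrite (negbTE wn).
by move: ne; rewrite (key _ w1B n1) (key _ w2B n2) eqxx.
Qed.

Lemma Rstar2 (A : {set X}) : A != set0 -> 1 < #|c A| ->
  exists w, [/\ w \in A, w \notin c A & rc c A = w |: c A].
Proof.
move=> hA hc.
have [w wr wc] := Rstar2_ex (leqnn #|A|) hA hc.
exists w; split => //; first exact: (subsetP (rc_sub A)).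
apply/eqP; rewrite eqEsubset; apply/andP; split.
  apply/subsetP => x xr; apply/setU1P.
  case: (boolP (x \in c A)) => xc; first by right.
  by left; rewrite (Rstar2_uniq hA xr xc wr wc).
apply/subsetP => x /setU1P[-> //|]; exact: c_rc.
Qed.

Lemma rc_tied (A : {set X}) : A != set0 -> 1 < #|c A| -> tied (rc c A).
Proof.
move=> hA hc.
have [w [wA wc Er]] := Rstar2 hA hc.
have c3 : 2 < #|rc c A| by rewrite Er cardsU1 wc.
have [v [vB vc EB]] := h5 hA (subxx _) (ltnW c3).
have hc' : 1 < #|c (rc c A)|.
  by move: c3; rewrite {1}EB setUC cardsU1 vc /= add1n ltnS.
by rewrite /tied (RC_full vB vc EB hc') eqxx /= ltnW.
Qed.


Definition tiedp (x y : X) := [exists S : {set X}, [&& x \in S, y \in S & tied S]].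
Definition Rr (x y : X) := Lr x y || tiedp x y.

Lemma tiedpP (x y : X) : reflect (exists S : {set X}, [/\ x \in S, y \in S & tied S]) (tiedp x y).
Proof.
apply: (iffP existsP) => [[S /and3P[h1' h2' h3']]|[S [h1' h2' h3']]]; exists S.
  by split.
by rewrite h1' h2' h3'.
Qed.

Lemma Rtrans (x y z : X) : Rr x y -> Rr y z -> Rr x z.
Proof.
rewrite /Rr => /orP[hxy|/tiedpP[S [xS yS tS]]] /orP[hyz|/tiedpP[S' [yS' zS' tS']]].
- by rewrite (Ltrans hxy hyz).
- case: (Lcomplete x z) => [->//|hzx]; apply/orP; right; apply/tiedpP.
  exists (x |: S'); split; [exact: setU11 | by rewrite !inE zS' orbT |].
  exact: tied_ext tS' zS' yS' hzx hxy.
- case: (Lcomplete x z) => [->//|hzx]; apply/orP; right; apply/tiedpP.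
  exists (z |: S); split; [by rewrite !inE xS orbT | exact: setU11 |].
  exact: tied_ext tS yS xS hyz hzx.
- apply/orP; right; apply/tiedpP; exists (S :|: S'); split.
  + by rewrite inE xS.
  + by rewrite inE zS' orbT.
  + exact: tied_union tS tS' yS yS'.
Qed.

Lemma maxRP (A : {set X}) x : reflect (x \in A /\ forall y, y \in A -> Rr x y) (x \in maxR A Rr).
Proof.
rewrite inE; apply: (iffP andP) => [[xA /forallP h]|[xA h]]; split => //.
  by move=> y yA; exact: (implyP (h y)) yA.
by apply/forallP => y; apply/implyP; apply: h.
Qed.

Lemma tied3 (A S1 S2 : {set X}) a x y : tied S1 -> tied S2 -> a \in S1 -> a \in S2 ->
  x \in S1 -> y \in S2 -> x != a -> y != a -> x != y -> x \in A -> a \in A -> y \in A ->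
  a \in rc c A -> x \in rc c A.
Proof.
move=> t1 t2 a1 a2 x1 y2 xa ya xy xA aA yA ar.
have tU := tied_union t1 t2 a1 a2.
have sB : (x |: [set a; y]) \subset S1 :|: S2.
  apply/subsetP => z; rewrite !inE; move=> /orP[|/orP[]]/eqP ->.
  - by rewrite x1.
  - by rewrite a1.
  - by rewrite y2 orbT.
have cB : 2 < #|(x |: [set a; y])|.
  by rewrite cardsU1 cards2 !inE negb_or xa xy eq_sym ya.
have tB := T1 tU sB cB.
have sBA : (x |: [set a; y]) \subset A.
  apply/subsetP => z; rewrite !inE; move=> /orP[|/orP[]]/eqP -> //.
have aB : a \in (x |: [set a; y]) by rewrite !inE eqxx orbT.
have := sub_rc sBA aB ar.
case/andP: tB => /eqP -> _ /subsetP; apply; by rewrite !inE eqxx.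
Qed.

Lemma key (A : {set X}) : A != set0 ->
  (maxR A Rr = c A /\ #|c A| = 1) \/
  (exists w, [/\ w \in A, w \notin c A, maxR A Rr = w |: c A & forall y, y \in c A -> Lr y w]).
Proof.
move=> hA.
have [a ha] := cne hA.
have aA := cin hA ha.
case: (ltnP 1 #|c A|) => hc.
  right.
  have [w [wA wc Er]] := Rstar2 hA hc.
  have tW := rc_tied hA hc.
  exists w; split => //; last by move=> y yc; exact: cL hA yc wA wc.
  apply/eqP; rewrite -Er eqEsubset; apply/andP; split; apply/subsetP => x.
    move/maxRP => [xA hx].
    case/orP: (hx a aA) => [Lxa | /tiedpP [S [xS aS tS]]].
      exact: c_rc hA (P1 hA ha xA Lxa).
    case: (boolP (x \in c A)) => xc; first exact: c_rc.
    have [b hb] : exists b, b \in c A :\ a.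
      apply/set0Pn; rewrite -card_gt0.
      by move: hc; rewrite (cardsD1 a) ha add1n ltnS.
    case/setD1P: hb => ba bc.
    have xa : x != a by apply/eqP => E; rewrite E ha in xc.
    have xb : x != b by apply/eqP => E; rewrite E bc in xc.
    exact: (tied3 tS tW aS (c_rc hA ha) xS (c_rc hA bc) xa ba xb xA aA (cin hA bc) (c_rc hA ha)).
  move=> xW; apply/maxRP; split; first exact: (subsetP (rc_sub A) _ xW).
  move=> y yA; case: (boolP (y \in rc c A)) => yr.
    by apply/orP; right; apply/tiedpP; exists (rc c A); split.
  by apply/orP; left; apply: rcL hA xW yA yr.
have E1 : #|c A| = 1.
  by apply/eqP; rewrite eqn_leq hc card_gt0; apply/set0Pn; exists a.
have Ea : c A = [set a].
  move/eqP/cards1P: E1 => [b Eb]; move: (ha); rewrite Eb; by move/set1P ->.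
have Er := Rstar1 hA Ea.
have aM : a \in maxR A Rr.
  apply/maxRP; split => // y yA; apply/orP; left.
  case: (boolP (y \in c A)) => yc.
    by move: yc; rewrite Ea => /set1P ->; apply: Lrefl.
  exact: cL hA ha yA yc.
have tx : forall z, z \in maxR A Rr -> z != a -> tiedp z a.
  move=> z /maxRP [zA hz] za; case/orP: (hz a aA) => // Lza.
  by move: (P1 hA ha zA Lza); rewrite Ea => /set1P E; rewrite E eqxx in za.
case: (pickP (fun x => (x \in maxR A Rr) && (x != a))) => [x /andP[xM xa] | H].
  right; exists x.
  have xA : x \in A by case/maxRP: xM.
  have xc : x \notin c A by rewrite Ea inE.
  split => //; last first.
    by move=> y; rewrite Ea => /set1P ->; exact: cL hA ha xA xc.
  apply/eqP; rewrite eqEsubset; apply/andP; split; apply/subsetP => z; last first.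
    by case/setU1P => [->//|]; rewrite Ea => /set1P ->.
  move=> zM; apply/setU1P.
  case: (eqVneq z a) => [->|za]; first by right.
  case: (eqVneq z x) => [->|zx]; first by left.
  have zA : z \in A by case/maxRP: zM.
  have /tiedpP [S1 [zS1 aS1 t1]] := tx z zM za.
  have /tiedpP [S2 [xS2 aS2 t2]] := tx x xM xa.
  have := tied3 t1 t2 aS1 aS2 zS1 xS2 za xa zx zA aA xA (c_rc hA ha).
  by rewrite Er Ea => /set1P E; rewrite E eqxx in za.
left; split => //.
apply/eqP; rewrite eqEsubset; apply/andP; split; apply/subsetP => z.
  move=> zM; move: (H z); rewrite zM /= => /negbT; rewrite negbK => /eqP ->; exact: ha.
by rewrite Ea => /set1P ->.
Qed.

Lemma mc_ok : mc_rep c Rr Lr.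
Proof.
move=> A hA; case: (key hA) => [[EM E1] | [w [wA wc EM hL]]].
  by rewrite EM E1; split.
split.
  rewrite EM cardsU1 wc /= add1n => /eqP; rewrite eqSS cards_eq0 => /eqP E.
  by have [u] := cne hA; rewrite E inE.
move=> _; exists w; split.
  split; first by rewrite EM setU11.
  by move=> y; rewrite EM => /setU1P[->|yc]; [exact: Lrefl | exact: hL].
by rewrite EM setU1K.
Qed.

Lemma if_dir : admits_mcr c.
Proof.
exists Rr, Lr; split.
  split.
    by move=> x y; case: (Lcomplete x y) => h; [left|right]; rewrite /Rr h.
  exact: Rtrans.
split; last exact: mc_ok.
split; last exact: Lantisym.
split; [exact: Lcomplete | exact: Ltrans].
Qed.

End IfDir.
Section OnlyIf.
Variable X : finType.
Variable c : {set X} -> {set X}.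
Hypothesis cc : choice_corr c.
Variables R L : rel X.
Hypothesis hR : weak_order R.
Hypothesis hL : linear_order L.
Hypothesis hm : mc_rep c R L.

Local Notation M A := (maxR A R).

Lemma cne' (A : {set X}) : A != set0 -> exists a, a \in c A.
Proof. by move=> hA; apply/set0Pn; case: (cc hA). Qed.
Lemma cin' (A : {set X}) a : A != set0 -> a \in c A -> a \in A.
Proof. by move=> hA; case: (cc hA) => _ /subsetP; apply. Qed.
Lemma menuP' (A : {set X}) x : x \in A -> A != set0.
Proof. by move=> h; apply/set0Pn; exists x. Qed.

Lemma Rrefl x : R x x.
Proof. by case: hR => hc _; case: (hc x x). Qed.
Lemma Rtr x y z : R x y -> R y z -> R x z.
Proof. by case: hR => _ ht; apply: ht. Qed.
Lemma Lanti x y : L x y -> L y x -> x = y.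
Proof. by case: hL => _ ha; apply: ha. Qed.

Lemma maxP (A : {set X}) x : reflect (x \in A /\ forall y, y \in A -> R x y) (x \in M A).
Proof.
rewrite inE; apply: (iffP andP) => [[xA /forallP h]|[xA h]]; split => //.
  by move=> y yA; exact: (implyP (h y)) yA.
by apply/forallP => y; apply/implyP; apply: h.
Qed.

Lemma M_sub (A : {set X}) : M A \subset A.
Proof. by apply/subsetP => x /maxP []. Qed.

Lemma mcP (A : {set X}) : A != set0 ->
  (#|M A| = 1 /\ c A = M A) \/
  (#|M A| <> 1 /\ exists x, is_minL (M A) L x /\ c A = M A :\ x).
Proof.
move=> hA; have [h1 h2] := hm hA.
case: (eqVneq #|M A| 1) => h.
  by left; split => //; apply: h1.
by right; split; [apply/eqP | apply: h2; apply/eqP].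
Qed.

Lemma cM (A : {set X}) x : A != set0 -> x \in c A -> x \in M A.
Proof.
move=> hA; case: (mcP hA) => [[_ ->] //| [_ [m [_ ->]]]].
by case/setD1P.
Qed.

Lemma minL_uniq (S : {set X}) x y : is_minL S L x -> is_minL S L y -> x = y.
Proof. by move=> [xS hx] [yS hy]; apply: Lanti; [apply: hy | apply: hx]. Qed.

Lemma c_of_M (A B : {set X}) : A != set0 -> B != set0 -> M A = M B -> c A = c B.
Proof.
move=> hA hB E.
case: (mcP hA) => [[c1 ->]|[n1 [m1 [m1m ->]]]];
case: (mcP hB) => [[c2 ->]|[n2 [m2 [m2m ->]]]] //.
- by rewrite E in c1.
- by rewrite E in n1.
- by rewrite E in m1m; rewrite E (minL_uniq m1m m2m).
Qed.

Lemma MM (A B : {set X}) z : A \subset B -> z \in M A -> z \in M B -> M A \subset M B.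
Proof.
move=> sAB /maxP [zA hzA] /maxP [zB hzB]; apply/subsetP => u /maxP [uA hu].
apply/maxP; split; first exact: (subsetP sAB).
by move=> w wB; apply: Rtr (hu z zA) (hzB w wB).
Qed.

Lemma MA (A B : {set X}) u : A \subset B -> u \in A -> u \in M B -> u \in M A.
Proof.
move=> sAB uA /maxP [uB hu]; apply/maxP; split => // w wA; apply: hu; exact: (subsetP sAB).
Qed.

Lemma MDx (A : {set X}) v x : v \in M A -> v != x -> M (A :\ x) = M A :\ x.
Proof.
move=> vM vx; have [vA hv] := maxP _ _ vM.
apply/eqP; rewrite eqEsubset; apply/andP; split; apply/subsetP => u.
  move/maxP => [/setD1P [ux uA] hu]; apply/setD1P; split => //.
  apply/maxP; split => // w wA.
  case: (eqVneq w x) => [E|wx]; last by apply: hu; apply/setD1P.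
  subst w; apply: Rtr (hu v _) (hv x wA); by apply/setD1P.
move/setD1P => [ux /maxP [uA hu]]; apply/maxP; split; first by apply/setD1P.
by move=> w /setD1P [_ wA]; apply: hu.
Qed.


Lemma c_rc' (A : {set X}) x : A != set0 -> x \in c A -> x \in rc c A.
Proof.
move=> hA hx; rewrite inE (cin' hA hx) /=.
case E0: (A :\ x == set0) => //=.
apply/negP => /eqP E.
have hA' : A :\ x != set0 by rewrite E0.
have : x \in c (A :\ x) by rewrite E.
by move/(cin' hA'); rewrite !inE eqxx.
Qed.

Lemma M_ne (A : {set X}) : A != set0 -> exists m, m \in M A.
Proof. by move=> hA; have [a ha] := cne' hA; exists a; apply: cM ha. Qed.

Lemma card2_sub (S : {set X}) x y : x \in S -> y \in S -> x != y -> 2 <= #|S|.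
Proof.
move=> xS yS xy; apply: leq_trans (subset_leq_card (_ : [set x; y] \subset S)).
  by rewrite cards2 xy.
by apply/subsetP => z; rewrite !inE => /orP[]/eqP ->.
Qed.

Lemma rc1 (A : {set X}) x : x \in rc c A -> x \in M A.
Proof.
move=> xr; apply/negPn/negP => xn.
move: xr; rewrite inE => /andP [xA]; apply/negP; rewrite negb_or negbK.
have hA := menuP' xA.
have [v vM] := M_ne hA.
have vx : v != x by apply/eqP => E; rewrite -E vM in xn.
have vAx : v \in A :\ x by apply/setD1P; split => //; case/maxP: vM.
rewrite (menuP' vAx) /=; apply/eqP; apply: c_of_M (menuP' vAx) hA _.
rewrite (MDx vM vx); apply/setP => z; rewrite in_setD1.
by case: (eqVneq z x) => [->|] /=; [rewrite (negbTE xn) | done].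
Qed.

Lemma rc2 (A : {set X}) x : #|M A| != 2 -> x \in M A -> x \in rc c A.
Proof.
move=> h2 xM; have xA : x \in A by case/maxP: xM.
have hA := menuP' xA.
rewrite inE xA /=; case E0: (A :\ x == set0) => //=.
have hAx : A :\ x != set0 by rewrite E0.
case: (boolP (x \in c A)) => xc.
  apply/negP => /eqP E.
  have : x \in c (A :\ x) by rewrite E.
  by move/(cin' hAx); rewrite !inE eqxx.
case: (mcP hA) => [[_ E]|[n1 [m [[mM mmin] E]]]].
  by rewrite E xM in xc.
have xm : x = m by move: xc; rewrite E in_setD1 xM andbT negbK => /eqP.
subst m.
have c3 : 2 < #|M A|.
  have : 0 < #|M A| by rewrite card_gt0; apply: menuP' xM.
  move: h2 n1; lia.
have [v hv] : exists v, v \in M A :\ x.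
  apply/set0Pn; rewrite -card_gt0; move: c3; rewrite (cardsD1 x) xM; lia.
case/setD1P: hv => vx vM.
have EM := MDx vM vx.
case: (mcP hAx) => [[c1 _]|[_ [m' [[m'M _] E']]]].
  by move: c1 c3; rewrite EM (cardsD1 x (M A)) xM; lia.
apply/negP => /eqP Ec.
have : m' \in M (A :\ x) := m'M.
by rewrite {1}EM -E -Ec E' in_setD1 eqxx.
Qed.

Lemma rc3 (A : {set X}) x : #|M A| = 2 -> x \in rc c A -> x \in c A.
Proof.
move=> h2 xr; apply/negPn/negP => xc.
have xM := rc1 xr.
have xA : x \in A by case/maxP: xM.
have hA := menuP' xA.
case: (mcP hA) => [[c1 _]|[n1 [m [[mM mmin] E]]]].
  by rewrite h2 in c1.
have xm : x = m by move: xc; rewrite E in_setD1 xM andbT negbK => /eqP.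
subst m.
have [v hv] : exists v, v \in M A :\ x.
  apply/set0Pn; rewrite -card_gt0; move: h2; rewrite (cardsD1 x) xM; lia.
case/setD1P: hv => vx vM.
have EM := MDx vM vx.
have vAx : v \in A :\ x by apply/setD1P; split => //; case/maxP: vM.
have hAx := menuP' vAx.
move: xr; rewrite inE xA (negbTE hAx) /= => /negP; apply.
case: (mcP hAx) => [[c1 ->]|[n2 _]].
  by rewrite EM -E.
by move: n2 h2; rewrite EM (cardsD1 x (M A)) xM; lia.
Qed.

Lemma oc1 : cond1 c.
Proof.
move=> x y A B hA sAB xA yA xc yc.
have hB : B != set0 by apply: (@menuP' _ x); exact: (subsetP sAB).
have xM := cM hA xc.
have yMB := cM hB yc.
have yMA := MA sAB yA yMB.
have xMB := subsetP (MM sAB yMA yMB) _ xM.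
case: (mcP hB) => [[_ ->] //| [nB [m [[mM mmin] EB]]]].
rewrite EB in_setD1 xMB andbT; apply/eqP => xm; subst m.
have yx : y != x by move: yc; rewrite EB; case/setD1P.
case: (mcP hA) => [[c1 _]| [nA [m' [[m'M m'min] EA]]]].
  by move: (card2_sub xM yMA (negbT (introF eqP (fun E => (negP yx) (introT eqP (esym E)))))); rewrite c1.
have xm' : x != m' by move: xc; rewrite EA; case/setD1P.
have := Lanti (m'min x xM) (mmin m' (subsetP (MM sAB yMA yMB) _ m'M)).
by move=> E; rewrite E eqxx in xm'.
Qed.

Lemma oc3 : cond3 c.
Proof.
move=> A hA2.
have hA : A != set0 by rewrite -card_gt0; apply: leq_trans hA2.
case: (mcP hA) => [[c1 E]|[nA [m [[mM _] E]]]].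
  move/eqP/cards1P: c1 => [m Em].
  have [x hx] : exists x, x \in A :\ m.
    apply/set0Pn; rewrite -card_gt0; move: hA2; rewrite (cardsD1 m); case: (m \in A) => /=; lia.
  case/setD1P: hx => xm xA; exists x => //.
  by rewrite E Em inE.
exists m; first by case/maxP: mM.
by rewrite E in_setD1 eqxx.
Qed.

Lemma oc4 : cond4 c.
Proof.
move=> A x y hA /setDP [xA xc] hxc; apply/negP => hyc.
set B := y |: A.
move: hxc hyc; rewrite -/B => hxc hyc.
have sAB : A \subset B by apply/subsetP => z zA; rewrite !inE zA orbT.
have hB : B != set0 by apply: (@menuP' _ y); rewrite !inE eqxx.
case: (boolP (y \in A)) => yA.
  have EB : B = A by apply/setUidPr; rewrite sub1set.
  by move: hxc; rewrite -/B EB (negbTE xc).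
have xy : x != y by apply/eqP => E; rewrite -E xA in yA.
have xMB := cM hB hxc.
have yMB := cM hB hyc.
have xMA := MA sAB xA xMB.
case: (mcP hA) => [[_ E]|[nA [mA [[mAM mAmin] EA]]]].
  by rewrite E xMA in xc.
have xm : x = mA by move: xc; rewrite EA in_setD1 xMA andbT negbK => /eqP.
subst mA.
case: (mcP hB) => [[c1 _]|[nB [mB [[mBM mBmin] EB]]]].
  by move: (card2_sub xMB yMB xy); rewrite c1.
have xmB : x != mB by move: hxc; rewrite EB; case/setD1P.
have ymB : y != mB by move: hyc; rewrite EB; case/setD1P.
have mBA : mB \in A.
  have : mB \in B by case/maxP: mBM.
  by rewrite /B !inE eq_sym (negbTE ymB).
have mBMA := MA sAB mBA mBM.
have := Lanti (mBmin x xMB) (mAmin mB mBMA).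
by move=> E; rewrite E eqxx in xmB.
Qed.

Lemma oc5 : cond5 c.
Proof.
move=> A B hA sB hB2.
have sBM : B \subset M A by apply/subsetP => z /(subsetP sB) /rc1.
have hB : B != set0 by rewrite -card_gt0; apply: leq_trans hB2.
have EMB : M B = B.
  apply/eqP; rewrite eqEsubset M_sub /=; apply/subsetP => u uB.
  apply/maxP; split => // w wB.
  have /maxP [_ hu] := subsetP sBM _ uB.
  apply: hu; have /maxP [] := subsetP sBM _ wB; done.
case: (mcP hB) => [[c1 _]|[nB [m [[mM _] E]]]].
  by move: hB2; rewrite -EMB c1.
rewrite EMB in mM E.
exists m; split => //.
  by rewrite E in_setD1 eqxx.
by rewrite E setUC setD1K.
Qed.

Lemma oc2 : cond2 c.
Proof.
move=> x y A B hA sAB xA yA xr yr.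
have hB : B != set0 by apply: (@menuP' _ x); exact: (subsetP sAB).
have yMB := rc1 yr.
have yMA := MA sAB yA yMB.
have sM := MM sAB yMA yMB.
have xMA := rc1 xr.
have xMB := subsetP sM _ xMA.
case: (eqVneq #|M B| 2) => h2; last exact: rc2 h2 xMB.
have yc := rc3 h2 yr.
case: (eqVneq x y) => [-> //| xy].
have EM : M A = M B.
  apply/eqP; rewrite eqEcard sM h2; exact: card2_sub xMA yMA xy.
have h2A : #|M A| = 2 by rewrite EM.
have xc := rc3 h2A xr.
by apply: (@c_rc' B x hB); rewrite -(c_of_M hA hB EM).
Qed.

Lemma only_if_dir : [/\ cond1 c, cond2 c, cond3 c, cond4 c & cond5 c].
Proof. split; [exact: oc1 | exact: oc2 | exact: oc3 | exact: oc4 | exact: oc5]. Qed.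

End OnlyIf.

Theorem theorem1 (X : finType) (c : {set X} -> {set X}) :
  choice_corr c ->
  (admits_mcr c <-> [/\ cond1 c, cond2 c, cond3 c, cond4 c & cond5 c]).
Proof.
move=> cc; split.
  by case=> R [L [hR [hL hm]]]; apply: (only_if_dir cc hR hL hm).
by case=> h1 h2 h3 h4 h5; apply: if_dir.
Qed.
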